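(* Let $\mathcal H=\mathcal H_A\otimes\mathcal H_B$ be finite-dimensional with $d=\dim\mathcal H$, local Hamiltonians $H_X(t_i)=\sum_{l_X}E^i_{l_X}\Pi^i_{l_X}$, $H_X(t_f)=\sum_{k_X}E^f_{k_X}\Pi^f_{k_X}$ ($X=A,B$), a CPTP map $\Phi$ on $\mathcal H$, $\beta>0$, local thermal states $\gamma^X_{\beta,i}=e^{-\beta H_X(t_i)}/\mathcal Z^X_{\beta,i}$, $\gamma^X_{\beta,f}=e^{-\beta H_X(t_f)}/\mathcal Z^X_{\beta,f}$, $\gamma_{\beta,i}=\gamma^A_{\beta,i}\otimes\gamma^B_{\beta,i}$, $\gamma_{\beta,f}=\gamma^A_{\beta,f}\otimes\gamma^B_{\beta,f}$, $\Delta F=-\beta^{-1}\ln\big(\mathcal Z^A_{\beta,f}\mathcal Z^B_{\beta,f}/(\mathcal Z^A_{\beta,i}\mathcal Z^B_{\beta,i})\big)$. Let the initial state have best separable approximation $\rho_i=\lambda\rho_{\mathcal E}+(1-\lambda)\rho_{\mathcal S}$ with $\rho_{\mathcal S}=\sum_j r_j\rho^A_j\otimes\rho^B_j$ ($r_j\ge0$, $\sum_jr_j=1$), and let each local state be decomposed as $\rho^X_j=(1-a^X_j)\gamma^X_{\beta,i}+a^X_j(1-c^X_j)\tau^X_{d_j}+a^X_jc^X_j\tau^X_{c_j}$ ($X=A,B$), where $a^X_j$ is the weight of athermality of $\rho^X_j$ w.r.t. $\gamma^X_{\beta,i}$ and $c^X_j,\tau^X_{d_j},\tau^X_{c_j}$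 come from the weight-of-coherence decomposition of the minimal athermal state in the eigenbasis of $H_X(t_i)$. Define $\rho_{d_j}=(1-a^A_j)a^B_j(1-c^B_j)\gamma^A_{\beta,i}\otimes\tau^B_{d_j}+a^A_j(1-c^A_j)(1-a^B_j)\tau^A_{d_j}\otimes\gamma^B_{\beta,i}+a^A_j(1-c^A_j)a^B_j(1-c^B_j)\tau^A_{d_j}\otimes\tau^B_{d_j}$ and $\rho_{c_j}=(1-a^A_j)a^B_jc^B_j\gamma^A_{\beta,i}\otimes\tau^B_{c_j}+a^A_jc^A_j(1-a^B_j)\tau^A_{c_j}\otimes\gamma^B_{\beta,i}+a^A_j(1-c^A_j)a^B_jc^B_j\tau^A_{d_j}\otimes\tau^B_{c_j}+a^A_jc^A_ja^B_j(1-c^B_j)\tau^A_{c_j}\otimes\tau^B_{d_j}+a^A_jc^A_ja^B_jc^B_j\tau^A_{c_j}\otimes\tau^B_{c_j}$. Then the bipartite EPM average satisfies $\langle e^{-\beta(\Delta E-\Delta F)}\rangle=\mathcal J^{(i)}\mathcal J^{(f)}$ with $$\mathcal J^{(i)}=\lambda\,\mathrm{Tr}(\gamma_{\beta,i}^{-1}\rho_{\mathcal E})+(1-\lambda)\sum_jr_j\Big((1-a^A_j)(1-a^B_j)d+\mathrm{Tr}(\gamma_{\beta,i}^{-1}\rho_{d_j})+\mathrm{Tr}(\gamma_{\beta,i}^{-1}\rho_{c_j})\Big),$$ $$\mathcal J^{(f)}=\lambda\,\mathrm{Tr}(\gamma_{\beta,f}\Phi[\rho_{\mathcal E}])+(1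-\lambda)\sum_jr_j\Big((1-a^A_j)(1-a^B_j)\mathrm{Tr}(\gamma_{\beta,f}\Phi[\gamma_{\beta,i}])+\mathrm{Tr}(\gamma_{\beta,f}\Phi[\rho_{d_j}])+\mathrm{Tr}(\gamma_{\beta,f}\Phi[\rho_{c_j}])\Big).$$
   Context: Bipartite EPM statistics: with $\mathbf l=(l_A,l_B)$, $\mathbf k=(k_A,k_B)$, $p^{\mathbf l,\mathbf k}=\mathrm{Tr}(\rho_i\,\Pi^i_{l_A}\otimes\Pi^i_{l_B})\mathrm{Tr}(\Phi[\rho_i]\,\Pi^f_{k_A}\otimes\Pi^f_{k_B})$, $\Delta E_{\mathbf l,\mathbf k}=E^f_{k_A}+E^f_{k_B}-E^i_{l_A}-E^i_{l_B}$, $\langle g(\Delta E)\rangle=\sum p^{\mathbf l,\mathbf k}g(\Delta E_{\mathbf l,\mathbf k})$. Best separable approximation (BSA): the decomposition $\rho=\lambda\rho_{\mathcal E}+(1-\lambda)\rho_{\mathcal S}$ with $\rho_{\mathcal E}$ a density operator, $\rho_{\mathcal S}$ separable, and $\lambda\in[0,1]$ minimal. Weight of athermality w.r.t. full-rank thermal $\gamma$: $\min\{a\ge0:\rho=(1-a)\gamma+a\tau,\ \tau\text{ a density operator}\}$, optimal $\tau$ the minimal athermal state. Weight of coherence w.r.t. a basis: $\min\{c\ge0:\tau=(1-c)\tau_d+c\tau_c,\ \tau_d\text{ diagonal},\ \tau_c\text{ a density operator}\}$. *)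

(* Defs.v *)
From mathcomp Require Import all_boot all_order all_algebra.
From mathcomp Require Import all_classical all_reals all_analysis.
From mathcomp Require Import complex mxtens.
Set Implicit Arguments. Unset Strict Implicit. Unset Printing Implicit Defensive.
Import Order.TTheory GRing.Theory Num.Theory.
Local Open Scope ring_scope.
Local Open Scope complex_scope.

Section QDefs.
Variable R : realType.
Local Notation C := (R[i]).

Definition rc (x : R) : C := x%:C.

Definition adjmx {m n} (M : 'M[C]_(m, n)) : 'M[C]_(n, m) := (map_mx conjc M)^T.

(* positive semidefinite: <v, M v> >= 0 (in the order of C, i.e. real and
   nonnegative) for every vector v *)
Definition psd {n} (M : 'M[C]_n) : Prop :=
  forall v : 'cV[C]_n, 0 <= (adjmx v *m M *m v) 0 0.

Definition density {n} (M : 'M[C]_n) : Prop := psd M /\ \tr M = 1.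

Definition proj_family {n k} (P : 'I_k -> 'M[C]_n) : Prop :=
  (forall l, P l *m P l = P l /\ adjmx (P l) = P l) /\
  (forall l m, l != m -> P l *m P m = 0) /\
  \sum_l P l = 1%:M.

Definition hamiltonian {n k} (E : 'I_k -> R) (P : 'I_k -> 'M[C]_n) : 'M[C]_n :=
  \sum_l rc (E l) *: P l.

Definition fcalc {n k} (f : R -> R) (E : 'I_k -> R) (P : 'I_k -> 'M[C]_n)
  : 'M[C]_n := \sum_l rc (f (E l)) *: P l.

Definition expmH {n k} (beta : R) (E : 'I_k -> R) (P : 'I_k -> 'M[C]_n) :=
  fcalc (fun e => expR (- (beta * e))) E P.

(* partition function Z = Tr e^{-beta H} (a positive real) *)
Definition partition_fn {n k} (beta : R) (E : 'I_k -> R) (P : 'I_k -> 'M[C]_n)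
  : R := complex.Re (\tr (expmH beta E P)).

Definition gibbs {n k} (beta : R) (E : 'I_k -> R) (P : 'I_k -> 'M[C]_n)
  : 'M[C]_n := rc (partition_fn beta E P)^-1 *: expmH beta E P.

Definition linear_map {n} (Phi : 'M[C]_n -> 'M[C]_n) : Prop :=
  forall (a : C) (X Y : 'M[C]_n), Phi (a *: X + Y) = a *: Phi X + Phi Y.

Definition trace_preserving {n} (Phi : 'M[C]_n -> 'M[C]_n) : Prop :=
  forall X, \tr (Phi X) = \tr X.

(* Phi (x) id_m acting on M_n (x) M_m (Kronecker index convention of tensmx) *)
Definition ampliation {n} (m : nat) (Phi : 'M[C]_n -> 'M[C]_n)
  (X : 'M[C]_(n * m)) : 'M[C]_(n * m) :=
  \matrix_(p, q)
    (Phi (\matrix_(a, b) X (mxtens_index (a, (mxtens_unindex p).2))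
                           (mxtens_index (b, (mxtens_unindex q).2))))
      (mxtens_unindex p).1 (mxtens_unindex q).1.

Definition completely_positive {n} (Phi : 'M[C]_n -> 'M[C]_n) : Prop :=
  forall (m : nat) (X : 'M[C]_(n * m)), psd X -> psd (ampliation Phi X).

Definition CPTP {n} (Phi : 'M[C]_n -> 'M[C]_n) : Prop :=
  linear_map Phi /\ completely_positive Phi /\ trace_preserving Phi.

Definition separable {m n} (rho : 'M[C]_(m * n)) : Prop :=
  exists (J : nat) (r : 'I_J -> R) (rA : 'I_J -> 'M[C]_m) (rB : 'I_J -> 'M[C]_n),
    (forall j, 0 <= r j) /\ \sum_j r j = 1 /\
    (forall j, density (rA j) /\ density (rB j)) /\
    rho = \sum_j rc (r j) *: tensmx (rA j) (rB j).

Definition is_BSA {m n} (rho : 'M[C]_(m * n)) (lam : R) (rhoE rhoS : 'M[C]_(m * n))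
  : Prop :=
  0 <= lam <= 1 /\ density rhoE /\ separable rhoS /\
  rho = rc lam *: rhoE + rc (1 - lam) *: rhoS /\
  (forall (lam' : R) (rhoE' rhoS' : 'M[C]_(m * n)),
      0 <= lam' <= 1 -> density rhoE' -> separable rhoS' ->
      rho = rc lam' *: rhoE' + rc (1 - lam') *: rhoS' -> lam <= lam').

Definition athermality_decomp {n} (gamma rho : 'M[C]_n) (a : R) (tau : 'M[C]_n)
  : Prop :=
  0 <= a /\ density tau /\ rho = rc (1 - a) *: gamma + rc a *: tau /\
  (forall (a' : R) (tau' : 'M[C]_n), 0 <= a' -> density tau' ->
      rho = rc (1 - a') *: gamma + rc a' *: tau' -> a <= a').

Definition eigenbasis {n} (U H : 'M[C]_n) : Prop :=
  adjmx U *m U = 1%:M /\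
  forall j : 'I_n, exists e : R, H *m col j U = rc e *: col j U.

Definition diag_in {n} (U tau : 'M[C]_n) : bool := is_diag_mx (adjmx U *m tau *m U).

Definition coherence_decomp {n} (U tau : 'M[C]_n) (c : R) (taud tauc : 'M[C]_n)
  : Prop :=
  0 <= c /\ density taud /\ diag_in U taud /\ density tauc /\
  tau = rc (1 - c) *: taud + rc c *: tauc /\
  (forall (c' : R) (taud' tauc' : 'M[C]_n), 0 <= c' -> density taud' ->
      diag_in U taud' -> density tauc' ->
      tau = rc (1 - c') *: taud' + rc c' *: tauc' -> c <= c').

Definition epm_average {dA dB nAi nBi nAf nBf : nat}
  (rho : 'M[C]_(dA * dB)) (Phi : 'M[C]_(dA * dB) -> 'M[C]_(dA * dB))
  (EAi : 'I_nAi -> R) (PAi : 'I_nAi -> 'M[C]_dA)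
  (EBi : 'I_nBi -> R) (PBi : 'I_nBi -> 'M[C]_dB)
  (EAf : 'I_nAf -> R) (PAf : 'I_nAf -> 'M[C]_dA)
  (EBf : 'I_nBf -> R) (PBf : 'I_nBf -> 'M[C]_dB) (g : R -> R) : C :=
  \sum_(lA < nAi) \sum_(lB < nBi) \sum_(kA < nAf) \sum_(kB < nBf)
    (\tr (rho *m tensmx (PAi lA) (PBi lB)) *
     \tr (Phi rho *m tensmx (PAf kA) (PBf kB))) *
    rc (g (EAf kA + EBf kB - EAi lA - EBi lB)).

Definition rho_dj {dA dB} (aA cA aB cB : R) (gA : 'M[C]_dA) (gB : 'M[C]_dB)
  (tdA : 'M[C]_dA) (tdB : 'M[C]_dB) : 'M[C]_(dA * dB) :=
  rc ((1 - aA) * aB * (1 - cB)) *: tensmx gA tdB +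
  rc (aA * (1 - cA) * (1 - aB)) *: tensmx tdA gB +
  rc (aA * (1 - cA) * aB * (1 - cB)) *: tensmx tdA tdB.

Definition rho_cj {dA dB} (aA cA aB cB : R) (gA : 'M[C]_dA) (gB : 'M[C]_dB)
  (tdA tcA : 'M[C]_dA) (tdB tcB : 'M[C]_dB) : 'M[C]_(dA * dB) :=
  rc ((1 - aA) * aB * cB) *: tensmx gA tcB +
  rc (aA * cA * (1 - aB)) *: tensmx tcA gB +
  rc (aA * (1 - cA) * aB * cB) *: tensmx tdA tcB +
  rc (aA * cA * aB * (1 - cB)) *: tensmx tcA tdB +
  rc (aA * cA * aB * cB) *: tensmx tcA tcB.

End QDefs.

(* Main.v *)
Require Import Defs.
From mathcomp Require Import all_boot all_order all_algebra.
From mathcomp Require Import all_classical all_reals all_analysis.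
From mathcomp Require Import complex mxtens.
From mathcomp Require Import ring lra.
Import Order.TTheory GRing.Theory Num.Theory.
Local Open Scope ring_scope.
Local Open Scope complex_scope.
Set Warnings "-all".

Section Helpers.
Variable R : realType.
Local Notation C := (R[i]).

Lemma tensmxDl {m n p q} (A1 A2 : 'M[C]_(m, n)) (B : 'M[C]_(p, q)) :
  tensmx (A1 + A2) B = tensmx A1 B + tensmx A2 B.
Proof. by apply/matrixP=> i j; rewrite !mxE mulrDl. Qed.
Lemma tensmxDr {m n p q} (A : 'M[C]_(m, n)) (B1 B2 : 'M[C]_(p, q)) :
  tensmx A (B1 + B2) = tensmx A B1 + tensmx A B2.
Proof. by apply/matrixP=> i j; rewrite !mxE mulrDr. Qed.
Lemma tensmxZl {m n p q} (a : C) (A : 'M[C]_(m, n)) (B : 'M[C]_(p, q)) :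
  tensmx (a *: A) B = a *: tensmx A B.
Proof. by apply/matrixP=> i j; rewrite !mxE mulrA. Qed.
Lemma tensmxZr {m n p q} (a : C) (A : 'M[C]_(m, n)) (B : 'M[C]_(p, q)) :
  tensmx A (a *: B) = a *: tensmx A B.
Proof. by apply/matrixP=> i j; rewrite !mxE mulrCA. Qed.
Lemma tensmx_suml {m n p q k} (F : 'I_k -> 'M[C]_(m, n)) (B : 'M[C]_(p, q)) :
  tensmx (\sum_i F i) B = \sum_i tensmx (F i) B.
Proof. by apply: (big_morph (fun A => tensmx A B)) => [x y|]; rewrite ?tensmxDl ?tens0mx. Qed.
Lemma tensmx_sumr {m n p q k} (A : 'M[C]_(m, n)) (F : 'I_k -> 'M[C]_(p, q)) :
  tensmx A (\sum_i F i) = \sum_i tensmx A (F i).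
Proof. by apply: (big_morph (fun B => tensmx A B)) => [x y|]; rewrite ?tensmxDr ?tensmx0. Qed.
Lemma tensmx11 m n : tensmx (1%:M : 'M[C]_m) (1%:M : 'M[C]_n) = 1%:M.
Proof.
apply/matrixP=> i j.
case: (mxtens_indexP i) => a b; case: (mxtens_indexP j) => c d.
rewrite tensmxE !mxE (inj_eq (can_inj (@mxtens_indexK _ _))).
by rewrite xpair_eqE; case: (a == c); case: (b == d); rewrite /= ?mulr1 ?mulr0 ?mul0r.
Qed.

Lemma tr_tens_sum {m n k k'} (M : 'M[C]_(m * n)) (a : 'I_k -> C) (b : 'I_k' -> C)
  (P : 'I_k -> 'M[C]_m) (Q : 'I_k' -> 'M[C]_n) :
  \sum_l \sum_l' a l * b l' * \tr (M *m tensmx (P l) (Q l')) =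
  \tr (M *m tensmx (\sum_l a l *: P l) (\sum_l' b l' *: Q l')).
Proof.
rewrite tensmx_suml mulmx_sumr raddf_sum; apply: eq_bigr => l _.
rewrite tensmx_sumr mulmx_sumr raddf_sum; apply: eq_bigr => l' _.
rewrite tensmxZl tensmxZr scalerA -scalemxAr; exact: esym (mxtraceZ _ _).
Qed.

Lemma fcalc_mul {n k} (P : 'I_k -> 'M[C]_n) (f g : 'I_k -> C) : proj_family P ->
  (\sum_l f l *: P l) *m (\sum_l g l *: P l) = \sum_l (f l * g l) *: P l.
Proof.
move=> [Hid [Hort _]]; rewrite mulmx_suml; apply: eq_bigr => l _.
rewrite mulmx_sumr (bigD1 l) //= big1 ?addr0.
  by rewrite -scalemxAl -scalemxAr (Hid l).1 scalerA.
move=> m Hm; rewrite -scalemxAl -scalemxAr Hort ?scaler0 //.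
by rewrite eq_sym.
Qed.

Lemma tr_proj_ge0 {n} (P : 'M[C]_n) : P *m P = P -> adjmx P = P -> 0 <= \tr P.
Proof.
move=> Hi Ha; rewrite /mxtrace; apply: sumr_ge0 => i _.
rewrite -{1}Hi mxE; apply: sumr_ge0 => k _.
have -> : P k i = conjc (P i k) by rewrite -{1}Ha !mxE.
exact: mulcJ_ge0.
Qed.

End Helpers.

Section Helpers2.
Variable R : realType.
Local Notation C := (R[i]).

Lemma tr_sum {n k} (F : 'I_k -> 'M[C]_n) : \tr (\sum_i F i) = \sum_i \tr (F i).
Proof. exact: (big_morph _ (@mxtraceD _ _) (mxtrace0 _ _)). Qed.

Lemma rc_gt0 (x : R) : 0 < x -> 0 < rc x.
Proof. by move=> hx; rewrite ltcE /= eqxx. Qed.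
Lemma rc_ge0 (x : R) : 0 <= x -> 0 <= rc x.
Proof. by move=> hx; rewrite lecE /= eqxx. Qed.

Lemma partition_pos {n k} beta (E : 'I_k -> R) (P : 'I_k -> 'M[C]_n) :
  proj_family P -> (0 < n)%N -> 0 < partition_fn beta E P.
Proof.
move=> [Hid [Hort Hsum]] n0.
have Hge l : 0 <= \tr (P l) by apply: tr_proj_ge0; [exact: (Hid l).1 | exact: (Hid l).2].
suff Hz : 0 < \tr (expmH beta E P).
  by move: Hz; rewrite ltcE => /andP[_]; rewrite /partition_fn.
rewrite /expmH /fcalc tr_sum.
case: (pickP (fun l => \tr (P l) != 0)) => [l /= Hl | H0].
  rewrite (bigD1 l) //= mxtraceZ; apply: ltr_pwDl.
    apply: mulr_gt0; first by apply: rc_gt0; rewrite expR_gt0.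
    by rewrite lt_def Hl Hge.
  apply: sumr_ge0 => m _; rewrite mxtraceZ mulr_ge0 //.
  by apply: rc_ge0; rewrite ltW ?expR_gt0.
have : (n%:R : C) = 0.
  rewrite -mxtrace1 -Hsum tr_sum big1 // => l _.
  by move: (H0 l) => /= /negbFE /eqP.
by move/eqP; rewrite pnatr_eq0 => /eqP n00; rewrite n00 in n0.
Qed.

Definition ginv {n k} beta (E : 'I_k -> R) (P : 'I_k -> 'M[C]_n) :=
  \sum_l rc (partition_fn beta E P * expR (beta * E l)) *: P l.

Lemma gibbs_ginv {n k} beta (E : 'I_k -> R) (P : 'I_k -> 'M[C]_n) :
  proj_family P -> partition_fn beta E P != 0 ->
  gibbs beta E P *m ginv beta E P = 1%:M.
Proof.
move=> HP HZ; rewrite /gibbs /ginv /expmH /fcalc -scalemxAl fcalc_mul // scaler_sumr.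
case: HP => _ [_ Hsum]; rewrite -Hsum; apply: eq_bigr => l _.
rewrite scalerA /rc -!rmorphM /=.
have he := expR_gt0 (beta * E l).
have -> : (partition_fn beta E P)^-1 * (expR (- (beta * E l)) *
   (partition_fn beta E P * expR (beta * E l))) = 1.
  rewrite expRN; field; rewrite HZ /= gt_eqF //.
by rewrite rmorph1 scale1r.
Qed.

End Helpers2.
Arguments ginv {R n k}.

Section Helpers3.
Variable R : realType.
Local Notation C := (R[i]).

Lemma lin0 {N} (Phi : 'M[C]_N -> 'M[C]_N) : linear_map Phi -> Phi 0 = 0.
Proof.
move=> H; have h := H 1 0 0; rewrite scaler0 addr0 scale1r in h.
by apply: (addrI (Phi 0)); rewrite addr0 -h.
Qed.
Lemma linD {N} (Phi : 'M[C]_N -> 'M[C]_N) : linear_map Phi ->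
  forall X Y, Phi (X + Y) = Phi X + Phi Y.
Proof. by move=> H X Y; have := H 1 X Y; rewrite !scale1r. Qed.
Lemma linZ {N} (Phi : 'M[C]_N -> 'M[C]_N) : linear_map Phi ->
  forall a X, Phi (a *: X) = a *: Phi X.
Proof. by move=> H a X; rewrite -(addr0 (a *: X)) H lin0 // addr0. Qed.

Lemma tens_decomp {m n} (aA cA aB cB : R) (gA tdA tcA tauA rhoA : 'M[C]_m)
  (gB tdB tcB tauB rhoB : 'M[C]_n) :
  rhoA = rc (1 - aA) *: gA + rc aA *: tauA ->
  tauA = rc (1 - cA) *: tdA + rc cA *: tcA ->
  rhoB = rc (1 - aB) *: gB + rc aB *: tauB ->
  tauB = rc (1 - cB) *: tdB + rc cB *: tcB ->
  tensmx rhoA rhoB = rc ((1 - aA) * (1 - aB)) *: tensmx gA gB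
    + rho_dj aA cA aB cB gA gB tdA tdB + rho_cj aA cA aB cB gA gB tdA tcA tdB tcB.
Proof.
move=> -> -> -> ->; apply/matrixP => p q; rewrite /rho_dj /rho_cj !mxE.
rewrite /rc !rmorphM !rmorphB !rmorph1 /=; ring.
Qed.

Lemma T_decomp {N J} (T : 'M[C]_N -> C)
  (TD : forall X Y, T (X + Y) = T X + T Y) (TZ : forall a X, T (a *: X) = a * T X)
  (lam : R) (rhoE rho_i gi : 'M[C]_N) (r c : 'I_J -> R) (M rd rcj : 'I_J -> 'M[C]_N)
  (tg : C) :
  rho_i = rc lam *: rhoE + rc (1 - lam) *: \sum_j rc (r j) *: M j ->
  (forall j, M j = rc (c j) *: gi + rd j + rcj j) -> T gi = tg ->
  T rho_i = rc lam * T rhoE + rc (1 - lam) *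
     \sum_j rc (r j) * (rc (c j) * tg + T (rd j) + T (rcj j)).
Proof.
move=> Hrho HM Hg.
have T0 : T 0 = 0 by rewrite -(scale0r 0) TZ mul0r.
have Ts : T (\sum_j rc (r j) *: M j) = \sum_j T (rc (r j) *: M j).
  exact: (big_morph T TD T0).
rewrite Hrho TD !TZ Ts; congr (_ + _ * _); apply: eq_bigr => j _.
by rewrite TZ HM !TD TZ Hg.
Qed.

Lemma tr_deg {N} (M : 'M[C]_N) : N = 0%N -> \tr M = 0.
Proof. by move=> HN; subst N; rewrite /mxtrace big_ord0. Qed.

Lemma gibbs_sum {n k} beta (E : 'I_k -> R) (P : 'I_k -> 'M[C]_n) :
  gibbs beta E P = \sum_l rc ((partition_fn beta E P)^-1 * expR (- (beta * E l))) *: P l.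
Proof.
rewrite /gibbs /expmH /fcalc scaler_sumr; apply: eq_bigr => l _.
by rewrite scalerA /rc rmorphM.
Qed.

Lemma g_identity (beta ZAi ZBi ZAf ZBf eAi eBi eAf eBf : R) :
  beta != 0 -> 0 < ZAi -> 0 < ZBi -> 0 < ZAf -> 0 < ZBf ->
  expR (- (beta * ((eAf + eBf - eAi - eBi) -
     - (beta^-1 * ln ((ZAf * ZBf) / (ZAi * ZBi))))))
  = ZAi * expR (beta * eAi) * (ZBi * expR (beta * eBi)) *
    ((ZAf^-1 * expR (- (beta * eAf))) * (ZBf^-1 * expR (- (beta * eBf)))).
Proof.
move=> hb h1 h2 h3 h4.
set Q := (ZAf * ZBf) / (ZAi * ZBi).
have -> : - (beta * ((eAf + eBf - eAi - eBi) - - (beta^-1 * ln Q))) =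
  beta * eAi + beta * eBi + - (beta * eAf) + - (beta * eBf) + - ln Q.
  by field.
rewrite !expRD [expR (- ln Q)]expRN lnK; last first.
  by rewrite posrE /Q divr_gt0 // mulr_gt0.
rewrite /Q; field.
by rewrite !gt_eqF.
Qed.

End Helpers3.
Arguments partition_pos {R n k}.
Arguments T_decomp {R N J} T TD TZ {lam rhoE rho_i gi r c M rd rcj tg}.
Arguments tr_deg {R N} M.

Lemma epm_fact (R : realType) (dA dB nAi nBi nAf nBf : nat)
  (EAi : 'I_nAi -> R) (PAi : 'I_nAi -> 'M[R[i]]_dA)
  (EBi : 'I_nBi -> R) (PBi : 'I_nBi -> 'M[R[i]]_dB)
  (EAf : 'I_nAf -> R) (PAf : 'I_nAf -> 'M[R[i]]_dA)
  (EBf : 'I_nBf -> R) (PBf : 'I_nBf -> 'M[R[i]]_dB)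
  (Phi : 'M[R[i]]_(dA * dB) -> 'M[R[i]]_(dA * dB)) (beta : R)
  (rho : 'M[R[i]]_(dA * dB)) :
  beta != 0 -> 0 < partition_fn beta EAi PAi -> 0 < partition_fn beta EBi PBi ->
  0 < partition_fn beta EAf PAf -> 0 < partition_fn beta EBf PBf ->
  epm_average rho Phi EAi PAi EBi PBi EAf PAf EBf PBf
   (fun DE => expR (- (beta * (DE - - (beta^-1 * ln ((partition_fn beta EAf PAf
     * partition_fn beta EBf PBf) / (partition_fn beta EAi PAi
     * partition_fn beta EBi PBi)))))))
  = \tr (rho *m tensmx (ginv beta EAi PAi) (ginv beta EBi PBi)) *
    \tr (Phi rho *m tensmx (gibbs beta EAf PAf) (gibbs beta EBf PBf)).
Proof.
move=> hb h1 h2 h3 h4.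
rewrite /ginv (@gibbs_sum _ _ _ beta EAf PAf) (@gibbs_sum _ _ _ beta EBf PBf) -!tr_tens_sum.
rewrite /epm_average mulr_suml; apply: eq_bigr => lA _.
rewrite mulr_suml; apply: eq_bigr => lB _.
rewrite mulr_sumr; apply: eq_bigr => kA _.
rewrite mulr_sumr; apply: eq_bigr => kB _.
rewrite g_identity // /rc !rmorphM /=; ring.
Qed.
Theorem mainTheorem7 (R : realType) (dA dB nAi nBi nAf nBf : nat)
  (EAi : 'I_nAi -> R) (PAi : 'I_nAi -> 'M[R[i]]_dA)
  (EBi : 'I_nBi -> R) (PBi : 'I_nBi -> 'M[R[i]]_dB)
  (EAf : 'I_nAf -> R) (PAf : 'I_nAf -> 'M[R[i]]_dA)
  (EBf : 'I_nBf -> R) (PBf : 'I_nBf -> 'M[R[i]]_dB)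
  (Phi : 'M[R[i]]_(dA * dB) -> 'M[R[i]]_(dA * dB)) (beta : R)
  (UA : 'M[R[i]]_dA) (UB : 'M[R[i]]_dB)
  (rho_i rhoE : 'M[R[i]]_(dA * dB)) (lam : R)
  (J : nat) (r : 'I_J -> R)
  (rhoA tauA tdA tcA : 'I_J -> 'M[R[i]]_dA)
  (rhoB tauB tdB tcB : 'I_J -> 'M[R[i]]_dB)
  (aA cA aB cB : 'I_J -> R) :
  proj_family PAi -> proj_family PBi -> proj_family PAf -> proj_family PBf ->
  CPTP Phi -> 0 < beta ->
  eigenbasis UA (hamiltonian EAi PAi) -> eigenbasis UB (hamiltonian EBi PBi) ->
  (forall j, 0 <= r j) -> \sum_j r j = 1 ->
  (forall j, density (rhoA j) /\ density (rhoB j)) ->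
  is_BSA rho_i lam rhoE (\sum_j rc (r j) *: tensmx (rhoA j) (rhoB j)) ->
  (forall j, athermality_decomp (gibbs beta EAi PAi) (rhoA j) (aA j) (tauA j)) ->
  (forall j, athermality_decomp (gibbs beta EBi PBi) (rhoB j) (aB j) (tauB j)) ->
  (forall j, coherence_decomp UA (tauA j) (cA j) (tdA j) (tcA j)) ->
  (forall j, coherence_decomp UB (tauB j) (cB j) (tdB j) (tcB j)) ->
  let gAi := gibbs beta EAi PAi in
  let gBi := gibbs beta EBi PBi in
  let gAf := gibbs beta EAf PAf in
  let gBf := gibbs beta EBf PBf in
  let gi := tensmx gAi gBi in
  let gf := tensmx gAf gBf in
  let DF := - (beta^-1 * ln ((partition_fn beta EAf PAf * partition_fn beta EBf PBf)
                / (partition_fn beta EAi PAi * partition_fn beta EBi PBi))) in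
  let rd j := rho_dj (aA j) (cA j) (aB j) (cB j) gAi gBi (tdA j) (tdB j) in
  let rcj j := rho_cj (aA j) (cA j) (aB j) (cB j) gAi gBi (tdA j) (tcA j) (tdB j) (tcB j) in
  let Ji := rc lam * \tr (invmx gi *m rhoE) +
            rc (1 - lam) * \sum_j rc (r j) *
              (rc ((1 - aA j) * (1 - aB j)) * (dA * dB)%:R
               + \tr (invmx gi *m rd j) + \tr (invmx gi *m rcj j)) in
  let Jf := rc lam * \tr (gf *m Phi rhoE) +
            rc (1 - lam) * \sum_j rc (r j) *
              (rc ((1 - aA j) * (1 - aB j)) * \tr (gf *m Phi gi)
               + \tr (gf *m Phi (rd j)) + \tr (gf *m Phi (rcj j))) in
  epm_average rho_i Phi EAi PAi EBi PBi EAf PAf EBf PBf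
    (fun DE => expR (- (beta * (DE - DF)))) = Ji * Jf.
Proof.
move=> HPAi HPBi HPAf HPBf [Hlin _] Hbeta _ _ Hr Hrs Hdens [_ [_ [_ [Hrho _]]]]
  HathA HathB HcohA HcohB.
cbv beta zeta.
have Hdec : forall j, tensmx (rhoA j) (rhoB j) =
   rc ((1 - aA j) * (1 - aB j)) *: tensmx (gibbs beta EAi PAi) (gibbs beta EBi PBi)
   + rho_dj (aA j) (cA j) (aB j) (cB j) (gibbs beta EAi PAi) (gibbs beta EBi PBi) (tdA j) (tdB j)
   + rho_cj (aA j) (cA j) (aB j) (cB j) (gibbs beta EAi PAi) (gibbs beta EBi PBi)
       (tdA j) (tcA j) (tdB j) (tcB j).
  move=> j; have [_ [_ [HA _]]] := HathA j; have [_ [_ [HB _]]] := HathB j.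
  have [_ [_ [_ [_ [HcA _]]]]] := HcohA j; have [_ [_ [_ [_ [HcB _]]]]] := HcohB j.
  exact: tens_decomp HA HcA HB HcB.
case: (posnP dA) => [dA0|dApos].
  have Hd : (dA * dB = 0)%N by rewrite dA0.
  rewrite /epm_average big1; last first.
    move=> lA _; apply: big1 => lB _; apply: big1 => kA _; apply: big1 => kB _.
    by rewrite (tr_deg _ Hd) !mul0r.
  have Hn : ((dA * dB)%:R : R[i]) = 0 by rewrite Hd.
  rewrite (tr_deg _ Hd) mulr0 add0r big1 ?mulr0 ?addr0 ?mul0r //.
  by move=> j _; rewrite Hn !(tr_deg _ Hd) mulr0 !addr0 mulr0.
case: (posnP dB) => [dB0|dBpos].
  have Hd : (dA * dB = 0)%N by rewrite dB0 muln0.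
  rewrite /epm_average big1; last first.
    move=> lA _; apply: big1 => lB _; apply: big1 => kA _; apply: big1 => kB _.
    by rewrite (tr_deg _ Hd) !mul0r.
  have Hn : ((dA * dB)%:R : R[i]) = 0 by rewrite Hd.
  rewrite (tr_deg _ Hd) mulr0 add0r big1 ?mulr0 ?addr0 ?mul0r //.
  by move=> j _; rewrite Hn !(tr_deg _ Hd) mulr0 !addr0 mulr0.
have h1 := partition_pos beta EAi PAi HPAi dApos.
have h2 := partition_pos beta EBi PBi HPBi dBpos.
have h3 := partition_pos beta EAf PAf HPAf dApos.
have h4 := partition_pos beta EBf PBf HPBf dBpos.
rewrite epm_fact ?gt_eqF //.
set gi := tensmx (gibbs beta EAi PAi) (gibbs beta EBi PBi).
have Hinv : gi *m tensmx (ginv beta EAi PAi) (ginv beta EBi PBi) = 1%:M.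
  by rewrite /gi tensmx_mul !gibbs_ginv ?gt_eqF // tensmx11.
have [Hu _] := mulmx1_unit Hinv.
have Hi : invmx gi = tensmx (ginv beta EAi PAi) (ginv beta EBi PBi).
  by rewrite -[LHS]mulmx1 -Hinv mulKmx.
rewrite -Hi mxtrace_mulC [\tr (Phi rho_i *m _)]mxtrace_mulC.
congr (_ * _).
  apply: (T_decomp (fun X => \tr (invmx gi *m X)) _ _ Hrho Hdec).
  - by move=> X Y; rewrite mulmxDr mxtraceD.
  - by move=> a X; rewrite -scalemxAr mxtraceZ.
  - by rewrite mulVmx // mxtrace1.
apply: (T_decomp (fun X => \tr (_ *m Phi X)) _ _ Hrho Hdec).
- by move=> X Y; rewrite linD // mulmxDr mxtraceD.
- by move=> a X; rewrite linZ // -scalemxAr mxtraceZ.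
- by [].
Qed.
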